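(* Let $S$ and $T$ be pointed sets and $n\in\mathbb{N}$. There is a bijection $\mathrm{Hist}^n(S,T)\cong\mathrm{Hist}^n_{strm}(S,T)$.
   Context: For a set $S$, $\mathrm{List}(S)=\coprod_{t\in\mathbb{N}}S^t$ is the set of finite lists (length $|\ell|=t\geq0$); for $|\ell|\geq1$, $\partial\ell$ drops the last entry. An $n$-historical propagator from $S$ to $T$ is a function $f\colon\mathrm{List}(S)\to\mathrm{List}(T)$ with $|f(\ell)|=|\ell|+n$ for all $\ell$ and $\partial f(\ell)=f(\partial\ell)$ whenever $|\ell|\geq1$; $\mathrm{Hist}^n(S,T)$ is the set of these. An $S$-stream is a function $\sigma\colon\mathbb{N}_{\geq1}\to S$; $\mathrm{Strm}(S)$ is the set of $S$-streams, and for $t\in\mathbb{N}$, $\sigma|_t\in\mathrm{List}(S)$ is the list $[\sigma(1),\dots,\sigma(t)]$. A function $F\colon\mathrm{Strm}(S)\to\mathrm{Strm}(T)$ is an $n$-historical stream propagator if for all $t\in\mathbb{N}$ and all $\sigma,\sigma'\in\mathrm{Strm}(S)$ with $\sigma|_t=\sigma'|_t$ one has $F(\sigma)|_{t+n}=F(\sigma')|_{t+n}$; $\mathrm{Hist}^n_{strm}(S,T)$ is the set of these. *)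

(* Defs.v *)
From mathcomp Require Import all_boot.
Set Implicit Arguments. Unset Strict Implicit. Unset Printing Implicit Defensive.

Definition dropLast (A : Type) (l : seq A) : seq A := take (size l).-1 l.

Definition is_hist (S T : Type) (n : nat) (f : seq S -> seq T) : Prop :=
  (forall l, size (f l) = size l + n) /\
  (forall l, 0 < size l -> dropLast (f l) = f (dropLast l)).

Definition Hist (n : nat) (S T : Type) : Type := {f : seq S -> seq T | is_hist n f}.

(* S-streams N_{>=1} -> S, re-indexed from 0: a stream sigma is represented
   by [s : nat -> S] with s k = sigma (k+1).  This is a bijective re-indexing. *)
Definition Strm (S : Type) : Type := nat -> S.

Definition restr (S : Type) (s : Strm S) (t : nat) : seq S := map s (iota 0 t).

Definition is_hist_strm (S T : Type) (n : nat) (F : Strm S -> Strm T) : Prop :=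
  forall (t : nat) (s s' : Strm S),
    restr s t = restr s' t -> restr (F s) (t + n) = restr (F s') (t + n).

Definition Hist_strm (n : nat) (S T : Type) : Type :=
  {F : Strm S -> Strm T | is_hist_strm n F}.

(* Main.v *)
Require Import Defs.
From mathcomp Require Import all_boot.
From Stdlib Require Import ProofIrrelevance FunctionalExtensionality.

Lemma restr_ext (S : Type) (s s' : Strm S) t :
  (forall k, k < t -> s k = s' k) -> restr s t = restr s' t.
Proof.
move=> H; apply/eq_in_map => k; rewrite mem_iota add0n => /andP[_ Hk]; exact: H.
Qed.

Lemma restr_eq (S : Type) (s s' : Strm S) t k :
  restr s t = restr s' t -> k < t -> s k = s' k.
Proof.
move=> H Hk; have := congr1 (fun l => nth (s 0) l k) H.
by rewrite /= /restr -!/(mkseq _ _) !nth_mkseq.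
Qed.

Lemma nth_restr (S : Type) (s : Strm S) t k x0 : k < t -> nth x0 (restr s t) k = s k.
Proof. by move=> Hk; rewrite /restr -/(mkseq _ _) nth_mkseq. Qed.

Lemma size_restr (S : Type) (s : Strm S) t : size (restr s t) = t.
Proof. by rewrite /restr size_map size_iota. Qed.

Lemma hist_prefix (S T : Type) n (f : seq S -> seq T) : is_hist n f ->
  forall d l m, size l = m + d -> take (m + n) (f l) = f (take m l).
Proof.
case=> Hs Hd; elim=> [|d IH] l m Hl.
  by rewrite addn0 in Hl; rewrite -Hl -(Hs l) !take_size.
have Hsz : size (dropLast l) = m + d.
  by rewrite /dropLast size_takel ?Hl ?addnS //= leq_pred.
have <- : take m (dropLast l) = take m l.
  by rewrite /dropLast take_takel // Hl addnS /= leq_addr.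
rewrite -(IH _ _ Hsz).
rewrite -Hd ?Hl ?addnS //.
rewrite /dropLast Hs Hl take_takel //.
by rewrite addnS addSn /= addnAC leq_addr.
Qed.

Section Cons.
Variables (S T : Type) (s0 : S) (t0 : T) (n : nat).

Definition ext (l : seq S) : Strm S := fun k => nth s0 l k.

Definition phiF (f : seq S -> seq T) : Strm S -> Strm T :=
  fun s k => nth t0 (f (restr s (k.+1 - n))) k.

Lemma phiF_ok f : is_hist n f -> is_hist_strm n (phiF f).
Proof.
move=> Hf t s s' H; apply: restr_ext => k Hk.
rewrite /phiF; congr (nth _ (f _) _); apply: restr_ext => j Hj.
apply: (@restr_eq _ s s' t j H).
by apply: (leq_trans Hj); rewrite leq_subLR addnC -ltnS.
Qed.

Definition psiF (F : Strm S -> Strm T) : seq S -> seq T :=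
  fun l => restr (F (ext l)) (size l + n).

Lemma psiF_ok F : is_hist_strm n F -> is_hist n (psiF F).
Proof.
move=> HF; split=> [l|l Hl]; first by rewrite /psiF size_restr.
rewrite /psiF /dropLast size_restr.
have Hsz : size (take (size l).-1 l) = (size l).-1 by rewrite size_takel // leq_pred.
rewrite Hsz /restr -map_take take_iota.
have -> : minn (size l + n).-1 (size l + n) = (size l).-1 + n.
  by rewrite (minn_idPl (leq_pred _)); case: (size l) Hl.
apply: HF; apply: restr_ext => k Hk; rewrite /ext nth_take //.
Qed.

Lemma round1 f : is_hist n f -> psiF (phiF f) = f.
Proof.
move=> Hf; apply: functional_extensionality => l.
have [Hs _] := Hf.
rewrite /psiF -Hs -[RHS](mkseq_nth t0); apply/eq_in_map => k.
rewrite mem_iota add0n => /andP[_ Hk]; rewrite /phiF.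
have Hm : k.+1 - n <= size l by rewrite leq_subLR addnC -Hs.
rewrite /restr map_nth_iota0 //.
have Hd : size l = (k.+1 - n) + (size l - (k.+1 - n)) by rewrite subnKC.
rewrite -(@hist_prefix _ _ n f Hf _ _ _ Hd) nth_take //.
by rewrite addnC -leq_subLR.
Qed.

Lemma round2 F : is_hist_strm n F -> phiF (psiF F) = F.
Proof.
move=> HF; apply: functional_extensionality => s;
  apply: functional_extensionality => k.
rewrite /phiF /psiF size_restr nth_restr; last by rewrite addnC -leq_subLR.
apply: (@restr_eq _ _ _ (k.+1 - n + n) k); last by rewrite addnC -leq_subLR.
apply: HF; apply: restr_ext => j Hj; rewrite /ext nth_restr //.
Qed.

End Cons.

Theorem proposition3p9 (S T : Type) (s0 : S) (t0 : T) (n : nat) :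
  exists phi : Hist n S T -> Hist_strm n S T, bijective phi.
Proof.
exists (fun f => exist _ (@phiF S T t0 n (proj1_sig f)) (@phiF_ok S T t0 n _ (proj2_sig f))).
exists (fun F => exist _ (@psiF S T s0 n (proj1_sig F)) (@psiF_ok S T s0 n _ (proj2_sig F))).
- move=> [f Hf] /=; apply: eq_sig => /=; first exact: (@round1 S T s0 t0 n f Hf).
  move=> e; apply: proof_irrelevance.
- move=> [F HF] /=; apply: eq_sig => /=; first exact: (@round2 S T s0 t0 n F HF).
  move=> e; apply: proof_irrelevance.
Qed.
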